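(* Let $X$ be an infinite-dimensional normed vector space over $\mathbb R$, with the metric induced by the norm. Then $h_\infty(X)=\infty$.
   Context: For a metric space $(X,d)$, $\delta>0$, $n\in\mathbb N$, $x_0\in X$: a $\delta$-path of length $n$ starting at $x_0$ is a sequence $(x_0,x_1,\dots,x_n)$ in $X$ with $d(x_i,x_{i+1})\le\delta$ for all $i$. Let $P(n,\delta,x_0)$ be the set of such $\delta$-paths, with distance $\max_i d(x_i,y_i)$ between $(x_i)$ and $(y_i)$. A set is $R$-separated if distinct elements are at distance $\ge R$. Let $s(n,R,\delta,x_0)$ be the supremum of cardinalities of $R$-separated subsets of $P(n,\delta,x_0)$. The coarse entropy of $X$ is $h_\infty(X)=\lim_{\delta\to\infty}\lim_{R\to\infty}\limsup_{n\to\infty}\frac1n\log s(n,R,\delta,x_0)\in[0,\infty]$ (independent of $x_0$); it equals the coarse entropy of the identity map of $X$ (and of any isometric self-embedding of $X$). *)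

(* Defs.v *)
From HB Require Import structures.
From mathcomp Require Import all_boot all_order all_algebra.
From mathcomp Require Import all_classical all_reals all_analysis.
Unset Printing Implicit Defensive.
Import Order.TTheory GRing.Theory Num.Theory.
Import numFieldNormedType.Exports.
Local Open Scope classical_set_scope.
Local Open Scope ring_scope.

Section CoarseEntropy.
Variables (R : realType) (X : normedModType R).

Definition infinite_dimensional : Prop :=
  forall s : seq X, exists x : X,
    ~ (exists c : seq R, x = \sum_(i < size s) c`_i *: s`_i).

(* A path of length n is a tuple (x_0, ..., x_n), indexed by 'I_n.+1. *)
Definition is_delta_path (n : nat) (delta : R) (x0 : X) (p : 'I_n.+1 -> X) : Prop :=
  p ord0 = x0 /\
  forall i : nat, (i < n)%N -> `|p (inord i) - p (inord i.+1)| <= delta.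

Definition path_dist (n : nat) (p q : 'I_n.+1 -> X) : R :=
  \big[Num.max/0]_(i < n.+1) `|p i - q i|.

Definition separated_paths (n : nat) (Rs delta : R) (x0 : X)
  (s : seq ('I_n.+1 -> X)) : Prop :=
  (forall k, (k < size s)%N -> is_delta_path n delta x0 (nth (fun _ => x0) s k)) /\
  (forall k l, (k < l < size s)%N ->
     nth (fun _ => x0) s k <> nth (fun _ => x0) s l /\
     Rs <= path_dist n (nth (fun _ => x0) s k) (nth (fun _ => x0) s l)).

Definition sep_number (n : nat) (Rs delta : R) (x0 : X) : \bar R :=
  ereal_sup [set ((size s)%:R)%:E | s in separated_paths n Rs delta x0].

Definition elog (y : \bar R) : \bar R :=
  match y with
  | r%:E => (ln r)%:E
  | +oo%E => +oo%E
  | -oo%E => -oo%E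
  end.

Definition growth_rate (Rs delta : R) (x0 : X) : \bar R :=
  limn_esup (fun n : nat => ((n%:R)^-1)%:E * elog (sep_number n Rs delta x0))%E.

Definition coarse_entropy (x0 : X) : \bar R :=
  lim ((fun delta : R => lim ((fun Rs : R => growth_rate Rs delta x0) @ +oo%R)) @ +oo%R).

End CoarseEntropy.

(* Main.v *)
Require Import Defs.
From HB Require Import structures.
From mathcomp Require Import all_boot all_order all_algebra.
From mathcomp Require Import all_classical all_reals all_analysis.
From mathcomp Require Import lra.
Import Order.TTheory GRing.Theory Num.Theory.
Import numFieldNormedType.Exports.

Module Aux.
Local Open Scope classical_set_scope.
Local Open Scope ring_scope.
Set Implicit Arguments. Unset Strict Implicit.
Section Span.
Variables (R : realType) (X : normedModType R).

Definition spn (s : seq X) (z : X) :=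
  exists c : seq R, z = \sum_(i < size s) c`_i *: s`_i.

Lemma spn_nil z : spn [::] z <-> z = 0.
Proof. by split; [case=> c ->; rewrite big_ord0 | move=> ->; exists [::]; rewrite big_ord0]. Qed.

Lemma spn_cons a t z :
  spn (a :: t) z <-> exists k y, spn t y /\ z = k *: a + y.
Proof.
split.
- case=> -[|c0 c] ->.
    exists 0, 0; split; first by exists [::]; rewrite big1 // => i _; rewrite nth_nil scale0r.
    by rewrite big1 ?scale0r ?addr0 // => i _; rewrite nth_nil scale0r.
  exists c0, (\sum_(i < size t) c`_i *: t`_i); split; first by exists c.
  by rewrite big_ord_recl /=; congr (_ + _); apply: eq_bigr => i _; rewrite lift0.
- case=> k [y [[c ->] ->]]; exists (k :: c).
  by rewrite big_ord_recl /=; congr (_ + _); apply: eq_bigr => i _; rewrite lift0.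
Qed.

Lemma spn0 t : spn t 0.
Proof. by exists [::]; rewrite big1 // => i _; rewrite nth_nil scale0r. Qed.

Lemma spnD t y1 y2 : spn t y1 -> spn t y2 -> spn t (y1 + y2).
Proof.
elim: t y1 y2 => [|a t IH] y1 y2.
  by move=> /spn_nil -> /spn_nil ->; apply/spn_nil; rewrite addr0.
move=> /spn_cons [k1 [u1 [h1 ->]]] /spn_cons [k2 [u2 [h2 ->]]].
apply/spn_cons; exists (k1 + k2), (u1 + u2); split; first exact: IH.
by rewrite scalerDl -!addrA; congr (_ + _); rewrite addrCA.
Qed.

Lemma spnZ t k y : spn t y -> spn t (k *: y).
Proof.
elim: t y => [|a t IH] y.
  by move=> /spn_nil ->; apply/spn_nil; rewrite scaler0.
move=> /spn_cons [k1 [u1 [h1 ->]]].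
apply/spn_cons; exists (k * k1), (k *: u1); split; first exact: IH.
by rewrite scalerDr scalerA.
Qed.

Lemma spn_nth t i : (i < size t)%N -> spn t t`_i.
Proof.
elim: t i => [|a t IH] [|i] //= hi; apply/spn_cons.
  by exists 1, 0; split; [exact: spn0 | rewrite scale1r addr0].
by exists 0, t`_i; split; [exact: IH | rewrite scale0r add0r].
Qed.

Definition dst (t : seq X) (z : X) : R := inf [set `|z - y| | y in spn t].

Lemma dist_le t z y : spn t y -> dst t z <= `|z - y|.
Proof.
move=> hy; apply: ge_inf; last by exists y.
by exists 0 => _ [w _ <-].
Qed.

Lemma dist_ge t z m : (forall y, spn t y -> m <= `|z - y|) -> m <= dst t z.
Proof.
move=> h; apply: lb_le_inf; first by exists `|z - 0|, 0; first exact: spn0.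
by move=> _ [w hw <-]; exact: h.
Qed.

Lemma dist_lip t z w : dst t z <= dst t w + `|z - w|.
Proof.
rewrite addrC -lerBlDl; apply: dist_ge => y hy; rewrite lerBlDl.
apply: le_trans (ler_distD w z y); exact: dist_le.
Qed.

End Span.
Section Key.
Variables (R : realType) (X : normedModType R).

Lemma dist_cont (t : seq X) z a : continuous (fun c : R => dst t (z - c *: a)).
Proof.
move=> c0; apply/cvgrPdist_le => e e0.
have a0 := normr_ge0 a.
have e1 : 0 < e / (`|a| + 1) by apply: divr_gt0 => //; lra.
have := (cvgrPdist_le _ _).1 (@cvg_id _ (nbhs c0)) _ e1.
move=> H; near=> c.
have hc : `|c0 - c| <= e / (`|a| + 1) by near: c; exact: H.
have hn : forall c1 c2 : R, `|(z - c1 *: a) - (z - c2 *: a)| = `|c1 - c2| * `|a|.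
  move=> c1 c2; rewrite -normrZ distrC; congr `|_|.
  by rewrite scalerBl opprB addrC addrA subrK.
have h1 := dist_lip t (z - c0 *: a) (z - c *: a).
have h2 := dist_lip t (z - c *: a) (z - c0 *: a).
rewrite !hn in h1 h2; rewrite distrC in h2.
rewrite ler_pdivlMr in hc; last lra.
have hD : `|c0 - c| * `|a| <= e.
  apply: le_trans hc; apply: ler_wpM2l => //; lra.
rewrite ler_norml; apply/andP; split; lra.
Unshelve. all: by end_near. Qed.

Lemma dist_pos (t : seq X) z : ~ spn t z -> 0 < dst t z.
Proof.
elim: t z => [|a t IH] z hz.
  have z0 : z != 0 by apply/eqP => z0; apply: hz; apply/spn_nil.
  apply: lt_le_trans (dist_ge (m := `|z|) _).
    by rewrite normr_gt0.
  by move=> y /spn_nil ->; rewrite subr0.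
have [ha|ha] := pselect (spn t a).
  have hz' : ~ spn t z.
    by move=> h; apply: hz; apply/spn_cons; exists 0, z; rewrite scale0r add0r.
  apply: lt_le_trans (IH z hz') _; apply: dist_ge => y /spn_cons [k [u [hu ->]]].
  by apply: dist_le; apply: spnD => //; exact: spnZ.
have al0 := IH a ha.
set al := dst t a in al0.
have zn := normr_ge0 z.
set M := (`|z| + 1) / al.
have M0 : 0 <= M by apply: divr_ge0 => //; lra.
have gpos : forall c : R, 0 < dst t (z - c *: a).
  move=> c; apply: IH => h; apply: hz; apply/spn_cons; exists c, (z - c *: a).
  by split => //; rewrite addrC subrK.
have cw : {within `[- M, M], continuous (fun c => dst t (z - c *: a))}.
  by apply: continuous_subspaceT => x; apply: dist_cont.
have [c hc cmin] := @EVT_min R (fun c => dst t (z - c *: a)) (- M) M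
  ltac:(lra) cw.
have gc := gpos c.
apply: (@lt_le_trans _ _ (Num.min 1 (dst t (z - c *: a)))).
  by rewrite lt_min ltr01 gc.
apply: dist_ge => y /spn_cons [k [u [hu ->]]].
have [kM|kM] := leP `|k| M.
  rewrite ge_min; apply/orP; right.
  apply: le_trans (cmin k _) _.
    by rewrite in_itv /= -ler_norml.
  by rewrite opprD addrA; apply: dist_le.
rewrite ge_min; apply/orP; left.
have k0 : k != 0 by apply/eqP => k0; move: kM; rewrite k0 normr0; lra.
have hka : `|k| * al <= `|k *: a + u|.
  have -> : k *: a + u = k *: (a - (- k^-1 *: u)).
    by rewrite scalerBr scalerA mulrN divff // scaleN1r opprK.
  rewrite normrZ; apply: ler_wpM2l => //; apply: dist_le.
  exact: spnZ.
have hM : `|z| + 1 < `|k| * al.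
  by rewrite -ltr_pdivrMr.
have := lerB_dist (k *: a + u) z.
rewrite distrC => h; lra.
Qed.

End Key.
Section Riesz.
Variables (R : realType) (X : normedModType R).

Lemma riesz (s : seq X) x : ~ spn s x ->
  exists v : X, `|v| <= 1 /\ forall w, spn s w -> 1/2 <= `|v - w|.
Proof.
move=> hx; have d0 := dist_pos hx; set d := dst s x in d0.
have hinf : has_inf [set `|x - y| | y in spn s].
  split; first by exists `|x - 0|, 0; first exact: spn0.
  by exists 0 => _ [w _ <-].
have [_ [y hy <-] hr] := inf_adherent d0 hinf.
have dle : d <= `|x - y| := dist_le x hy.
rewrite -/(dst s x) -/d in hr.
set r := `|x - y| in hr dle *.
have r0 : 0 < r by lra.
have ri : `|r^-1| = r^-1 by rewrite ger0_norm // invr_ge0 ltW.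
exists (r^-1 *: (x - y)); split.
  by rewrite normrZ -/r ri mulVf ?gt_eqF.
move=> w hw.
have -> : r^-1 *: (x - y) - w = r^-1 *: (x - (y + r *: w)).
  by rewrite opprD addrA [in RHS]scalerBr scalerA mulVf ?gt_eqF // scale1r.
rewrite normrZ ri (mulrC r^-1) ler_pdivlMr //.
have : d <= `|x - (y + r *: w)| by apply: dist_le; apply: spnD => //; exact: spnZ.
lra.
Qed.

Lemma sep_seq (hinf : @infinite_dimensional R X) N : exists s : seq X,
  [/\ size s = N, (forall i, (i < N)%N -> `|s`_i| <= 1) &
      (forall i j, (i < j < N)%N -> 1/2 <= `|s`_i - s`_j|)].
Proof.
elim: N => [|N [s [hs h1 h2]]]; first by exists [::]; split => // i j; rewrite ltn0 andbF.
have [x hx] := hinf s.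
have [v [hv1 hv2]] := riesz hx.
exists (v :: s); split => /=; first by rewrite hs.
  by move=> [|i] //= hi; apply: h1.
move=> [|i] [|j] //= hij.
  by apply: hv2; apply: spn_nth; rewrite hs.
exact: h2.
Qed.

End Riesz.
Section Paths.
Variables (R : realType) (X : normedModType R).

Lemma diffZ (x0 v w : X) (a b : R) :
  (x0 + a *: v) - (x0 + b *: w) = a *: v - b *: w.
Proof. by rewrite opprD addrACA subrr add0r. Qed.

Lemma sep_big (hinf : @infinite_dimensional R X) (n : nat) (Rs delta : R) (x0 : X) N :
  0 < delta -> (0 < n)%N -> Rs <= n%:R * delta / 2 ->
  exists s, size s = N /\ @separated_paths R X n Rs delta x0 s.
Proof.
move=> d0 n0 hRs.
have [vs [hs h1 h2]] := sep_seq hinf N.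
pose f (v : X) := fun i : 'I_n.+1 => x0 + (i%:R * delta) *: v.
exists (map f vs); split; first by rewrite size_map.
rewrite /separated_paths size_map hs; split.
  move=> k hk; rewrite (nth_map 0) ?hs //; split.
    by rewrite /f /= mul0r scale0r addr0.
  move=> i hi; have hi1 : (i < n.+1)%N by apply: leqW.
  rewrite /f !inordK //.
  rewrite diffZ -scalerBl normrZ -mulrBl.
  have -> : (i%:R - i.+1%:R : R) = -1 by rewrite -natr1 opprD addrA subrr add0r.
  rewrite mulN1r normrN ger0_norm; last exact: ltW.
  have := h1 k hk; have := normr_ge0 vs`_k; nra.
move=> k l /andP [kl lN].
have kN : (k < N)%N by apply: ltn_trans lN.
rewrite !(nth_map 0) ?hs //.
have hd : n%:R * delta / 2 <= `|f vs`_k ord_max - f vs`_l ord_max|.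
  rewrite /f diffZ -scalerBr normrZ ger0_norm; last first.
    by rewrite mulr_ge0 // ?ltW.
  have := h2 k l ltac:(by rewrite kl lN).
  have nd : 0 < n%:R * delta by rewrite mulr_gt0 // ltr0n.
  move=> h; rewrite [leRHS]mulrC -ler_pdivrMr //.
  rewrite (_ : ((ord_max : 'I_n.+1) : nat)%:R = n%:R :> R) // mulrAC mulfV ?gt_eqF //; lra.
have nd : 0 < n%:R * delta by rewrite mulr_gt0 // ltr0n.
split.
  move=> E; move: hd; rewrite E subrr normr0; lra.
apply: le_trans hRs _; apply: le_trans hd _.
exact: (le_bigmax 0 (fun i => `|f vs`_k i - f vs`_l i|) ord_max).
Qed.

End Paths.
Section Main.
Variables (R : realType) (X : normedModType R).

Lemma sep_inf (hinf : @infinite_dimensional R X) (n : nat) (Rs delta : R) (x0 : X) :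
  0 < delta -> (0 < n)%N -> Rs <= n%:R * delta / 2 ->
  @sep_number R X n Rs delta x0 = +oo%E.
Proof.
move=> d0 n0 hRs.
have H : forall N : nat, ((N%:R)%:E <= @sep_number R X n Rs delta x0)%E.
  move=> N; have [s [hs hsep]] := @sep_big R X hinf n Rs delta x0 N d0 n0 hRs.
  by apply: ereal_sup_ubound; exists s => //; rewrite hs.
case E : (sep_number _ _ _ _ _) H => [r| |] // H.
  have := H (Num.Def.archi_bound `|r|).
  rewrite lee_fin => h.
  clear H E.
  have h1 : r <= `|r| by apply: Num.Theory.ler_norm.
  have h2 : `|r| < (Num.Def.archi_bound `|r|)%:R by apply: archi_boundP.
  exfalso; lra.
by have := H 0%N.
Qed.

Lemma growth_inf (hinf : @infinite_dimensional R X) (Rs delta : R) (x0 : X) :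
  0 < delta -> @growth_rate R X Rs delta x0 = +oo%E.
Proof.
move=> d0.
pose B := Num.Def.archi_bound (`|Rs| * 2 / delta).
have hB := archi_boundP (x := `|Rs| * 2 / delta) ltac:(by rewrite divr_ge0 // ?mulr_ge0 // ltW).
rewrite /growth_rate limn_esup_lim.
apply: (lim_near_cst (@ereal_hausdorff R)).
near=> m.
apply/eqP; rewrite -leye_eq; apply: ereal_sup_ubound; exists m => //=.
have m0 : (0 < m)%N by near: m; exists 1%N.
have mB : (B <= m)%N by near: m; exists B.
rewrite sep_inf //.
  by rewrite mulry gtr0_sg ?mul1e // invr_gt0 ltr0n.
have : (B%:R <= m%:R :> R) by rewrite ler_nat.
have := normr_ge0 Rs; have := Num.Theory.ler_norm Rs.
move: hB; rewrite ltr_pdivrMr // => hB.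
nra.
Unshelve. all: by end_near. Qed.

Lemma main_aux (x0 : X) :
  @infinite_dimensional R X -> @coarse_entropy R X x0 = +oo%E.
Proof.
move=> hinf; rewrite /coarse_entropy.
apply: (lim_near_cst (@ereal_hausdorff R)).
near=> delta.
have d0 : 0 < delta by near: delta; apply: nbhs_pinfty_gt.
rewrite (_ : (fun Rs => @growth_rate R X Rs delta x0) = fun _ => +oo%E).
  exact: (lim_cst (@ereal_hausdorff R)).
by apply: funext => Rs; exact: growth_inf.
Unshelve. all: by end_near. Qed.

End Main.
End Aux.

Theorem mainTheorem2 (R : realType) (X : normedModType R) (x0 : X) :
  @infinite_dimensional R X -> @coarse_entropy R X x0 = +oo%E.
Proof. exact: Aux.main_aux. Qed.
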